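(* Let $\Sigma$ be an alphabet with $|\Sigma|=2$. For every antimorphic involution $\theta$ on $\Sigma^*$, there is no infinite word over $\Sigma$ that is pseudo-cube-free with respect to $\theta$.
   Context: A function $\theta:\Sigma^*\to\Sigma^*$ is an antimorphic involution if $\theta(uv)=\theta(v)\theta(u)$ and $\theta(\theta(w))=w$. A pseudo cube with respect to $\theta$ is a nonempty word $u_1u_2u_3$ such that for all $1\le i,j\le 3$, $u_i=u_j$ or $u_i=\theta(u_j)$. A word is pseudo-cube-free with respect to $\theta$ if no factor (contiguous subword) of it is a pseudo cube. *)

(* Defs.v *)
From mathcomp Require Import all_boot.
Set Implicit Arguments. Unset Strict Implicit. Unset Printing Implicit Defensive.

Definition antimorphic_involution (S : Type) (theta : seq S -> seq S) : Prop :=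
  (forall u v : seq S, theta (u ++ v) = theta v ++ theta u) /\
  (forall w : seq S, theta (theta w) = w).

Definition pseudo_cube (S : eqType) (theta : seq S -> seq S) (x : seq S) : Prop :=
  x <> [::] /\
  exists u1 u2 u3 : seq S,
    x = u1 ++ u2 ++ u3 /\
    forall a b : seq S, a \in [:: u1; u2; u3] -> b \in [:: u1; u2; u3] ->
      a = b \/ a = theta b.

Definition factor (S : Type) (w : nat -> S) (i n : nat) : seq S :=
  mkseq (fun k => w (i + k)) n.

Definition pseudo_cube_free_inf (S : eqType) (theta : seq S -> seq S)
    (w : nat -> S) : Prop :=
  forall i n : nat, ~ pseudo_cube theta (factor w i n).

(* Main.v *)
Require Import Defs.
From mathcomp Require Import all_boot zify.
Set Implicit Arguments. Unset Strict Implicit.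

Lemma two_elt (S : finType) (hS : #|S| = 2) (x y z : S) :
  y != z -> x = y \/ x = z.
Proof.
move=> yz; case: (eqVneq x y) => [->|xy]; first by left.
case: (eqVneq x z) => [->|xz]; first by right.
have u : uniq [:: x; y; z] by rewrite /= !inE negb_or xy xz yz.
have := max_card (mem [:: x; y; z]).
by rewrite (card_uniqP u) hS.
Qed.

Lemma factorD (S : Type) (w : nat -> S) i m n :
  factor w i (m + n) = factor w i m ++ factor w (i + m) n.
Proof.
rewrite /factor /mkseq iotaD map_cat; congr (_ ++ _).
rewrite add0n -[m in iota m n]addn0 iotaDl -map_comp; apply: eq_map => k /=; by rewrite addnA.
Qed.

Definition okb (a b : seq bool) := (a == b) || (a == rev b).
Definition fb (p : seq bool) i n := mkseq (fun k => nth false p (i + k)) n.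
Definition cand := [seq (i, l) | i <- iota 0 10, l <- iota 1 3].
Definition chk (p : seq bool) :=
  has (fun il : nat * nat => let: (i, l) := il in
     let a := fb p i l in let b := fb p (i + l) l in let c := fb p (i + l + l) l in
     [&& 0 < l, i + (l + (l + l)) <= 10, okb a b, okb a c, okb b a, okb b c,
         okb c a & okb c b]) cand.
Fixpoint allseqs n : seq (seq bool) :=
  if n is n'.+1 then [seq b :: s | b <- [:: true; false], s <- allseqs n'] else [:: [::]].
Lemma allseqsP n p : size p = n -> p \in allseqs n.
Proof.
elim: n p => [|n IH] [|b p] // [] /IH h.
by apply: (allpairs_f (fun b s => b :: s)) => //; case: b.
Qed.
Lemma chk_all : all chk (allseqs 10).
Proof. by vm_compute. Qed.

Lemma theta_nil (S : Type) (theta : seq S -> seq S) :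
  antimorphic_involution theta -> theta [::] = [::].
Proof.
case=> hm _; have e := congr1 size (hm [::] [::]); rewrite /= size_cat in e.
have : size (theta [::]) = 0 by lia.
by move/size0nil.
Qed.

Lemma theta_size (S : Type) (theta : seq S -> seq S) :
  antimorphic_involution theta -> forall s, size s <= size (theta s).
Proof.
move=> h; have t0 := theta_nil h; case: h => hm hi.
elim=> [|x s IH] //=.
rewrite -cat1s hm size_cat -addn1 leq_add //.
case E: (theta [:: x]) => //.
by have := hi [:: x]; rewrite E t0.
Qed.

Theorem mainTheorem10 (S : finType) (hS : #|S| = 2)
    (theta : seq S -> seq S) (htheta : antimorphic_involution theta) :
  ~ exists w : nat -> S, pseudo_cube_free_inf theta w.
Proof.
have hsz := theta_size htheta.
case: (htheta) => hm hi.
have s1 : forall x : S, size (theta [:: x]) = 1.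
  move=> x; apply/eqP; rewrite eqn_leq (hsz [:: x]) andbT.
  by have := hsz (theta [:: x]); rewrite hi.
pose f (x : S) := head x (theta [:: x]).
have tf : forall x, theta [:: x] = [:: f x].
  by move=> x; have := s1 x; rewrite /f; case: (theta [:: x]) => // a [].
have tr : forall s, theta s = rev (map f s).
  elim=> [|x s IH]; first exact: theta_nil.
  by rewrite -cat1s hm IH tf /= rev_cons cats1.
have ff : forall x, f (f x) = x.
  by move=> x; have := hi [:: x]; rewrite tf tf => -[].
case=> w hw.
have cube3 : forall i l, 0 < l ->
   (forall a b, a \in [:: factor w i l; factor w (i + l) l; factor w (i + l + l) l] ->
      b \in [:: factor w i l; factor w (i + l) l; factor w (i + l + l) l] ->
      a = b \/ a = theta b) -> False.
  move=> i l l0 H; apply: (hw i (l + (l + l))); split.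
    by case: l l0 {H}.
  exists (factor w i l), (factor w (i + l) l), (factor w (i + l + l) l).
  by rewrite !factorD.
case: (pickP (fun x => f x == x)) => [a /eqP fa | nofix].
- (* theta = rev *)
  have fid : forall y, f y = y.
    move=> y; case: (eqVneq y a) => [->//|ya].
    case: (two_elt hS (f y) ya) => // fya.
    by case/eqP: ya; rewrite -(ff y) fya fa.
  have : 1 < #|S| by rewrite hS.
  case/card_gt1P => y0 [y1 [_ _ y01]].
  pose g (b : bool) := if b then y0 else y1.
  have gw : forall j, g (w j == y0) = w j.
    move=> j; rewrite /g; case: eqP => [//|/eqP ne].
    by case: (two_elt hS (w j) y01) => // /eqP; rewrite (negbTE ne).
  pose p := mkseq (fun k => w k == y0) 10.
  have fbw : forall i n, i + n <= 10 -> map g (fb p i n) = factor w i n.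
    move=> i n hin; rewrite /fb /factor /mkseq -map_comp; apply/eq_in_map => k.
    rewrite mem_iota add0n => kn /=; rewrite nth_mkseq ?gw //.
    by apply: leq_trans hin; rewrite ltn_add2l.
  have okg : forall a b, okb a b -> map g a = map g b \/ map g a = theta (map g b).
    move=> a' b'; case/orP => /eqP ->; [by left | right].
    by rewrite tr map_rev (eq_map fid) map_id.
  have := allseqsP (size_mkseq (fun k => w k == y0) 10).
  rewrite -/p => /(allP chk_all) /hasP [[i l] _].
  case/and5P => l0 hb oab oac /and4P [oba obc oca ocb].
  apply: (cube3 i l l0).
  have e1 : map g (fb p i l) = factor w i l.
    by apply: fbw; apply: leq_trans hb; rewrite leq_add2l leq_addr.
  have e2 : map g (fb p (i + l) l) = factor w (i + l) l.
    by apply: fbw; apply: leq_trans hb; rewrite -addnA leq_add2l leq_add2l leq_addr.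
  have e3 : map g (fb p (i + l + l) l) = factor w (i + l + l) l.
    by apply: fbw; rewrite -!addnA.
  rewrite -e1 -e2 -e3 => a' b'; rewrite !inE.
  by case/or3P => /eqP -> ; case/or3P => /eqP ->; apply: okg; rewrite // /okb eqxx.
- (* f swaps *)
  apply: (cube3 0 1 erefl) => a' b'; rewrite !inE.
  have sw : forall x y : S, [:: x] = [:: y] \/ [:: x] = theta [:: y].
    move=> x y; rewrite tf; have := nofix y; rewrite eq_sym => /negbT hy.
    by case: (two_elt hS x hy) => ->; [left|right].
  by case/or3P => /eqP -> ; case/or3P => /eqP ->; apply: sw.
Qed.
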